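(* For any $K>0$ and $\varepsilon>0$ there exists $\alpha=\alpha(\varepsilon,K)>0$ such that the following holds. Let $(\Sigma,f,E,A)$ be a two-dimensional periodic linear cocycle, bounded by $K$, such that at every point the return map is diagonalizable with real, positive, distinct eigenvalues. Suppose there is $X\in\Sigma$ at which the angle between the two eigenspaces of $A^{\mathrm{per}(X)}(X)$ is less than $\alpha$. Then there exists a continuous path $\gamma:[0,1]\to C(X)$ such that: (1) $\gamma(0)=A|_{\mathcal{O}(X)}$; (2) $\mathrm{diam}(\gamma)<\varepsilon$; (3) $\det\widetilde{\gamma(t)}$ is independent of $t$; (4) writing $\lambda_m(t)\le\lambda_b(t)$ for the absolute values of the eigenvalues of $\widetilde{\gamma(t)}$, for $s<t$ one has $\lambda_m(s)\le\lambda_m(t)$ and $\lambda_b(s)\ge\lambda_b(t)$; (5) $\widetilde{\gamma(1)}$ has two non-real complex eigenvalues.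
   Context: A linear cocycle $(\Sigma,f,E,A)$ consists of a topological space $\Sigma$, a homeomorphism $f$ of $\Sigma$, a Riemannian vector bundle $E$ over $\Sigma$ (here of rank $2$), and linear isomorphisms $A(x):E(x)\to E(f(x))$. It is periodic if every point is $f$-periodic, with return map $A^{\mathrm{per}(x)}(x)=A(f^{\mathrm{per}(x)-1}(x))\circ\cdots\circ A(x)$. It is bounded by $K$ if $\sup_x\|A(x)\|<K$ and $\sup_x\|A(x)^{-1}\|<K$. The angle between one-dimensional subspaces $V_1,V_2$ of $E(X)$ is the $\beta\in[0,\pi/2]$ with $\cos\beta=|(v_1,v_2)|/(|v_1||v_2|)$ for nonzero $v_i\in V_i$. For $X\in\Sigma$ with orbit $\mathcal{O}(X)$ and period $p$, $C(X)$ is the set of families $\sigma=(\sigma(x))_{x\in\mathcal{O}(X)}$ of linear isomorphisms $\sigma(x):E(x)\to E(f(x))$, with distance $\mathrm{dist}(\sigma_1,\sigma_2)=\max\{\max_x\|\sigma_1(x)-\sigma_2(x)\|,\max_x\|\sigma_1(x)^{-1}-\sigma_2(x)^{-1}\|\}$; $\mathrm{diam}(\gamma)=\max_{s,t}\mathrm{dist}(\gamma(s),\gamma(t))$; $\tilde\sigma=\sigma(f^{p-1}(X))\circ\cdots\circ\sigma(X)$. *)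

(* Defs.v *)
From HB Require Import structures.
From mathcomp Require Import all_boot all_order all_algebra.
From mathcomp Require Import complex.
From mathcomp Require Import all_classical all_reals all_analysis.
Set Implicit Arguments. Unset Strict Implicit. Unset Printing Implicit Defensive.
Import Order.TTheory GRing.Theory Num.Theory.
Local Open Scope ring_scope.
Local Open Scope classical_set_scope.

(* Fibres of the rank-2 Riemannian bundle are identified (via orthonormal frames)
   with R^2 (column vectors 'cV[R]_2) carrying the Euclidean inner product. *)

Definition inner {R : realType} (u v : 'cV[R]_2) : R := \sum_(i < 2) u i 0 * v i 0.
Definition vnorm {R : realType} (v : 'cV[R]_2) : R := Num.sqrt (inner v v).

Definition opnorm {R : realType} (M : 'M[R]_2) : R :=
  sup [set vnorm (M *m v) | v in [set v : 'cV[R]_2 | vnorm v = 1]].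

Definition angle {R : realType} (u v : 'cV[R]_2) : R :=
  acos (`|inner u v| / (vnorm u * vnorm v)).

Definition is_period {S : Type} (f : S -> S) (x : S) (p : nat) : Prop :=
  (0 < p)%N /\ iter p f x = x /\ (forall q, (0 < q < p)%N -> iter q f x <> x).

(* composition s (p-1) o ... o s 1 o s 0, as a matrix product *)
Definition retmap {R : realType} (p : nat) (s : nat -> 'M[R]_2) : 'M[R]_2 :=
  \prod_(i < p) s (p.-1 - i)%N.

(* A family sigma in C(X), X of period p: sigma k : E(f^k X) -> E(f^(k+1) X), k < p,
   all linear isomorphisms.  (Values at k >= p are irrelevant.) *)
Definition in_CX {R : realType} (p : nat) (s : nat -> 'M[R]_2) : Prop :=
  forall k, (k < p)%N -> s k \in unitmx.

Definition distC {R : realType} (p : nat) (s1 s2 : nat -> 'M[R]_2) : R :=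
  Num.max (\big[Num.max/0]_(k < p) opnorm (s1 k - s2 k))
          (\big[Num.max/0]_(k < p) opnorm (invmx (s1 k) - invmx (s2 k))).

Definition cmod {R : realType} (z : R[i]) : R := Num.sqrt (complex.Re z ^+ 2 + complex.Im z ^+ 2).

Definition eigpair {R : realType} (M : 'M[R]_2) (z1 z2 : R[i]) : Prop :=
  char_poly (map_mx (fun x : R => x%:C%C) M) = ('X - z1%:P) * ('X - z2%:P).

(* Main.v *)
Require Import Defs.
From HB Require Import structures.
From mathcomp Require Import all_boot all_order all_algebra.
From mathcomp Require Import complex.
From mathcomp Require Import all_classical all_reals all_analysis.
From mathcomp Require Import ring lra.
Import Order.TTheory GRing.Theory Num.Theory.
Local Open Scope ring_scope.
Local Open Scope classical_set_scope.
Lemma lift01 : lift (ord0 : 'I_2) (ord0 : 'I_1) = 1.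
Proof. by apply/val_inj. Qed.
Lemma det2 (F : comNzRingType) (M : 'M[F]_2) : \det M = M 0 0 * M 1 1 - M 0 1 * M 1 0.
Proof.
rewrite (expand_det_row _ 0) big_ord_recl big_ord1 /cofactor !det_mx11 /=.
rewrite !mxE /=.
have -> : lift (0:'I_2) (0:'I_1) = 1 by apply/val_inj.
have -> : lift (1:'I_2) (0:'I_1) = 0 by apply/val_inj.
rewrite /= expr0 expr1; ring.
Qed.
Lemma tr2 (F : comNzRingType) (M : 'M[F]_2) : \tr M = M 0 0 + M 1 1.
Proof. by rewrite /mxtrace big_ord_recl big_ord1 lift01. Qed.
Lemma mul2E (F : comNzRingType) (M N : 'M[F]_2) i j : (M *m N) i j = M i 0 * N 0 j + M i 1 * N 1 j.
Proof. by rewrite mxE big_ord_recl big_ord1 lift01. Qed.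
Lemma mulv2E (F : comNzRingType) (M : 'M[F]_2) (N : 'cV[F]_2) i : (M *m N) i 0 = M i 0 * N 0 0 + M i 1 * N 1 0.
Proof. by rewrite mxE big_ord_recl big_ord1 lift01. Qed.
Lemma innerE (R : realType) (u v : 'cV[R]_2) : inner u v = u 0 0 * v 0 0 + u 1 0 * v 1 0.
Proof. by rewrite /inner big_ord_recl big_ord1 lift01. Qed.
Section VN.
Variable R : realType.
Implicit Types (u v : 'cV[R]_2) (M : 'M[R]_2).

Lemma inner_ge0 v : 0 <= inner v v.
Proof. rewrite innerE; nra. Qed.

Lemma vnorm_ge0 v : 0 <= vnorm v.
Proof. exact: sqrtr_ge0. Qed.

Lemma vnorm_sqr v : vnorm v ^+ 2 = inner v v.
Proof. by rewrite /vnorm sqr_sqrtr // inner_ge0. Qed.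

Lemma vnormZ (c : R) v : vnorm (c *: v) = `|c| * vnorm v.
Proof.
rewrite /vnorm (_ : inner (c *: v) (c *: v) = c ^+ 2 * inner v v).
  by rewrite sqrtrM ?sqr_ge0 // sqrtr_sqr.
by rewrite !innerE !mxE; ring.
Qed.

Lemma le_sqrt_sq (a b : R) : 0 <= b -> a <= b ^+ 2 -> Num.sqrt a <= b.
Proof.
move=> b0 ab; rewrite -[leRHS](ger0_norm b0) -sqrtr_sqr; exact: ler_wsqrtr.
Qed.

Definition e0 : 'cV[R]_2 := delta_mx 0 0.
Lemma vnorm_e0 : vnorm e0 = 1.
Proof. by rewrite /vnorm innerE !mxE /= mulr1 mulr0 addr0 sqrtr1. Qed.

Definition frob M := M 0 0 ^+ 2 + M 0 1 ^+ 2 + M 1 0 ^+ 2 + M 1 1 ^+ 2.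

Lemma inner_mul_le M v : inner (M *m v) (M *m v) <= frob M * inner v v.
Proof.
rewrite !innerE !mulv2E /frob.
set a := M 0 0; set b := M 0 1; set c := M 1 0; set d := M 1 1.
set x := v 0 0; set y := v 1 0.
have h1 := sqr_ge0 (a * y - b * x).
have h2 := sqr_ge0 (c * y - d * x).
nra.
Qed.

Definition opset M := [set vnorm (M *m v) | v in [set v : 'cV[R]_2 | vnorm v = 1]].

Lemma opset_ub M : has_ubound (opset M).
Proof.
exists (Num.sqrt (frob M)) => _ [v /= v1 <-].
have := inner_mul_le M v; rewrite -(vnorm_sqr v) v1 expr1n mulr1 => h.
rewrite /vnorm; exact: ler_wsqrtr.
Qed.

Lemma opset_n0 M : opset M !=set0.
Proof. by exists (vnorm (M *m e0)); exists e0 => //=; rewrite vnorm_e0. Qed.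

Lemma opnorm_unit M v : vnorm v = 1 -> vnorm (M *m v) <= opnorm M.
Proof. by move=> v1; apply: (ub_le_sup (opset_ub M)); exists v. Qed.

Lemma opnorm_ge0 M : 0 <= opnorm M.
Proof. exact: le_trans (vnorm_ge0 _) (opnorm_unit M e0 vnorm_e0). Qed.

Lemma vnorm_eq0 v : vnorm v = 0 -> v = 0.
Proof.
move=> h; have : inner v v = 0 by rewrite -vnorm_sqr h expr0n.
rewrite innerE => h2.
have a0 : v 0 0 = 0 by nra.
have b0 : v 1 0 = 0 by nra.
apply/matrixP => i j; rewrite (ord1 j) mxE.
by case: i => [[|[|//]] ?] /=; [rewrite -a0 | rewrite -b0]; congr (v _ _); apply: val_inj.
Qed.

Lemma opnorm_ub M v : vnorm (M *m v) <= opnorm M * vnorm v.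
Proof.
have [v0|vn0] := eqVneq (vnorm v) 0.
  have z0 : vnorm (0 : 'cV[R]_2) = 0 by rewrite /vnorm innerE !mxE !mulr0 addr0 sqrtr0.
  by rewrite (vnorm_eq0 v v0) mulmx0 z0 mulr0.
have vp : 0 < vnorm v by rewrite lt0r vn0 vnorm_ge0.
have h := opnorm_unit M ((vnorm v)^-1 *: v).
rewrite vnormZ -scalemxAr vnormZ ger0_norm ?invr_ge0 ?vnorm_ge0 // mulVf // in h.
have H := h erefl.
have : vnorm v * ((vnorm v)^-1 * vnorm (M *m v)) <= vnorm v * opnorm M by rewrite ler_pM2l.
by rewrite mulrA mulfV // mul1r mulrC.
Qed.

Lemma opnorm_le M c : (forall v, vnorm v = 1 -> vnorm (M *m v) <= c) -> opnorm M <= c.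
Proof. by move=> h; apply: ge_sup; [exact: opset_n0 | move=> _ [v /= v1 <-]; exact: h]. Qed.

End VN.
Lemma cp2 (F : comNzRingType) (M : 'M[F]_2) :
  char_poly M = 'X^2 - (\tr M)%:P * 'X + (\det M)%:P.
Proof.
apply/polyP => i.
have sz := size_char_poly M.
have mo := char_poly_monic M.
have ct := char_poly_trace M erefl.
have cd := char_poly_det M.
rewrite coefD coefB coefXn coefCM coefX coefC.
case: i => [|[|[|i]]] /=.
- by rewrite cd expr2 mulrNN mulr1 mul1r; ring.
- by rewrite ct; ring.
- by move/monicP: mo; rewrite /lead_coef sz /= => ->; ring.
- rewrite nth_default ?sz //; ring.
Qed.

Lemma quad_expand (F : comNzRingType) (z1 z2 : F) :
  ('X - z1%:P) * ('X - z2%:P) = 'X^2 - (z1 + z2)%:P * 'X + (z1 * z2)%:P.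
Proof. rewrite polyCD polyCM; ring. Qed.

Lemma quad_coef1 (F : comNzRingType) (c d : F) : ('X^2 - c%:P * 'X + d%:P)`_1 = - c.
Proof. by rewrite coefD coefB coefXn coefCM coefX coefC /=; ring. Qed.
Lemma quad_coef0 (F : comNzRingType) (c d : F) : ('X^2 - c%:P * 'X + d%:P)`_0 = d.
Proof. by rewrite coefD coefB coefXn coefCM coefX coefC /=; ring. Qed.

Section Eig.
Variable R : realType.
Local Open Scope complex_scope.

Lemma map_tr (M : 'M[R]_2) : \tr (map_mx (fun x : R => x%:C) M) = (M 0 0 + M 1 1)%:C.
Proof. by rewrite tr2 !mxE /= rmorphD. Qed.
Lemma map_det (M : 'M[R]_2) : \det (map_mx (fun x : R => x%:C) M) = (M 0 0 * M 1 1 - M 0 1 * M 1 0)%:C.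
Proof. by rewrite det2 !mxE /= rmorphB !rmorphM. Qed.

Lemma eigpairE (M : 'M[R]_2) z1 z2 : eigpair M z1 z2 ->
  z1 + z2 = (M 0 0 + M 1 1)%:C /\ z1 * z2 = (M 0 0 * M 1 1 - M 0 1 * M 1 0)%:C.
Proof.
rewrite /eigpair cp2 map_tr map_det quad_expand => H; split.
  by have := congr1 (fun p : {poly R[i]} => p`_1) H; rewrite !quad_coef1 => /oppr_inj.
by have := congr1 (fun p : {poly R[i]} => p`_0) H; rewrite !quad_coef0.
Qed.

Lemma eigpairI (M : 'M[R]_2) z1 z2 :
  z1 + z2 = (M 0 0 + M 1 1)%:C -> z1 * z2 = (M 0 0 * M 1 1 - M 0 1 * M 1 0)%:C ->
  eigpair M z1 z2.
Proof. by rewrite /eigpair cp2 map_tr map_det quad_expand => -> ->. Qed.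

End Eig.
Section Mod.
Variable R : realType.
Local Open Scope complex_scope.

Definition Pmod (d tau x y : R) := 0 <= x /\ 0 <= y /\ x * y = d /\
  ((x + y = tau) \/ (x = y /\ x ^+ 2 = d /\ tau ^+ 2 < 4 * d)).

Lemma eig_cases (tau d : R) (z1 z2 : R[i]) : z1 + z2 = tau%:C -> z1 * z2 = d%:C ->
  0 < d -> 0 < tau -> Pmod d tau (cmod z1) (cmod z2).
Proof.
case: z1 => a b; case: z2 => c e; rewrite /cmod /=.
move=> [hs he] [hp hq] d0 t0.
have e1 : e = - b by lra.
rewrite e1 in hp hq *.
have [b0|bn0] := eqVneq b 0.
  rewrite b0 in hp hq *.
  have c1 : c = tau - a by lra.
  rewrite c1 in hp *.
  have ha : 0 < a by nra.
  have hc : 0 < tau - a by nra.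
  rewrite oppr0 !expr0n /= !addr0 !sqrtr_sqr !gtr0_norm //.
  split; first lra; split; first lra; split; first nra. by left; ring.
have ca : c = a.
  have : b * (c - a) = 0 by nra.
  by move/eqP; rewrite mulf_eq0 (negbTE bn0) /= subr_eq0 => /eqP.
rewrite ca in hs hp *.
have hd : a ^+ 2 + b ^+ 2 = d by nra.
rewrite sqrrN hd.
have sd : 0 <= Num.sqrt d := sqrtr_ge0 d.
have sq : Num.sqrt d ^+ 2 = d by rewrite sqr_sqrtr // ltW.
split => //; split => //; split; first by rewrite -expr2.
right; split => //; split => //.
have b2 : 0 < b ^+ 2 by rewrite lt0r sqr_ge0 andbT sqrf_eq0.
nra.
Qed.

Lemma Pmod_mono (d ts tt xs ys xt yt : R) : 0 < d -> tt < ts -> 0 < tt ->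
  Pmod d ts xs ys -> Pmod d tt xt yt ->
  Num.min xs ys <= Num.min xt yt /\ Num.max xt yt <= Num.max xs ys.
Proof.
move=> d0 tst tt0 [xs0 [ys0 [ps hs]]] [xt0 [yt0 [pt ht]]].
case: ht => [ht | [ext [xt2 tt2]]].
- case: hs => [hs | [exs [xs2 ts2]]]; last first.
    exfalso. have h1 : tt ^+ 2 < ts ^+ 2 by nra.
    have h2 : 4 * d <= tt ^+ 2.
      have := sqr_ge0 (xt - yt). rewrite -ht -pt. nra.
    lra.
  have key : forall a b c e, 0 <= a -> 0 <= b -> 0 <= c -> 0 <= e -> a * b = d -> c * e = d ->
     c + e < a + b -> a <= b -> c <= e -> a <= c /\ e <= b.
    move=> a b c e a0 b0 c0 e0 ab ce sum ab' ce'.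
    have ap : 0 < a by nra.
    have cp : 0 < c by nra.
    have a2 : a ^+ 2 <= d by nra.
    have c2 : c ^+ 2 <= d by nra.
    have hac : a <= c.
      rewrite leNgt; apply/negP => ca.
      have h1 : (a - c) * (a * c - d) = a * c * ((c + e) - (a + b)) by nra.
      have : a * c < a ^+ 2 by nra.
      nra.
    split => //; nra.
  have [abs|abs] := leP xs ys; have [abt|abt] := leP xt yt.
  + have [h1 h2] : xs <= xt /\ yt <= ys by apply: key => //; lra.
    by split.
  + have [h1 h2] : xs <= yt /\ xt <= ys by apply: key => //; [rewrite mulrC|lra|lra].
    by split.
  + have [h1 h2] : ys <= xt /\ yt <= xs by apply: key => //; [rewrite mulrC|lra|lra].
    by split.
  + have [h1 h2] : ys <= yt /\ xt <= xs by apply: key => //; [rewrite mulrC|rewrite mulrC|lra|lra|lra].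
    by split.
- rewrite -ext minxx maxxx.
  have [abs|abs] := leP xs ys.
  + have h1 : xs <= xt by nra.
    have h2 : xt <= ys by nra.
    by split.
  + have h1 : ys <= xt by nra.
    have h2 : xt <= xs by nra.
    by split.
Qed.

End Mod.
Lemma ord2P (i : 'I_2) : i = 0 \/ i = 1.
Proof.
case: i => [[|[|//]] Hi]; [left|right]; exact: val_inj.
Qed.

Lemma eq_mx2 (F : nzRingType) (M N : 'M[F]_2) : M 0 0 = N 0 0 -> M 0 1 = N 0 1 ->
  M 1 0 = N 1 0 -> M 1 1 = N 1 1 -> M = N.
Proof.
move=> h1 h2 h3 h4; apply/matrixP => i j.
by case: (ord2P i) => ->; case: (ord2P j) => ->.
Qed.

Section Mat.
Variable R : realType.

Definition mk2 (a b c d : R) : 'M[R]_2 :=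
  \matrix_(i < 2, j < 2) if i == 0 then (if j == 0 then a else b) else (if j == 0 then c else d).

Lemma mk2E a b c d : [/\ mk2 a b c d 0 0 = a, mk2 a b c d 0 1 = b,
  mk2 a b c d 1 0 = c & mk2 a b c d 1 1 = d].
Proof. by rewrite !mxE. Qed.

Lemma id2E : [/\ (1%:M : 'M[R]_2) 0 0 = 1, (1%:M : 'M[R]_2) 0 1 = 0,
  (1%:M : 'M[R]_2) 1 0 = 0 & (1%:M : 'M[R]_2) 1 1 = 1].
Proof. by rewrite !mxE. Qed.

Definition Nmat (n x1 y1 : R) := mk2 (-(n*y1*x1)) (-(n*y1*y1)) (n*x1*x1) (n*x1*y1).
Definition M1 (N : 'M[R]_2) (t : R) := 1%:M + t *: N.

Lemma M1E n x1 y1 t : M1 (Nmat n x1 y1) t =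
  mk2 (1 - t*(n*y1*x1)) (-(t*(n*y1*y1))) (t*(n*x1*x1)) (1 + t*(n*x1*y1)).
Proof.
have [a b c d] := mk2E (-(n*y1*x1)) (-(n*y1*y1)) (n*x1*x1) (n*x1*y1).
have [a' b' c' d'] := mk2E (1 - t*(n*y1*x1)) (-(t*(n*y1*y1))) (t*(n*x1*x1)) (1 + t*(n*x1*y1)).
have [i1 i2 i3 i4] := id2E.
apply: eq_mx2; rewrite !mxE /Nmat ?a ?b ?c ?d ?a' ?b' ?c' ?d' /=; ring.
Qed.

Lemma M1_det n x1 y1 t : \det (M1 (Nmat n x1 y1) t) = 1.
Proof.
rewrite M1E det2; have [a b c d] := mk2E (1 - t*(n*y1*x1)) (-(t*(n*y1*y1))) (t*(n*x1*x1)) (1 + t*(n*x1*y1)).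
rewrite a b c d; ring.
Qed.

Lemma M1_inv n x1 y1 t : M1 (Nmat n x1 y1) t *m M1 (Nmat n x1 y1) (- t) = 1%:M.
Proof.
rewrite !M1E.
have [a b c d] := mk2E (1 - t*(n*y1*x1)) (-(t*(n*y1*y1))) (t*(n*x1*x1)) (1 + t*(n*x1*y1)).
have [a' b' c' d'] := mk2E (1 - (-t)*(n*y1*x1)) (-((-t)*(n*y1*y1))) ((-t)*(n*x1*x1)) (1 + (-t)*(n*x1*y1)).
have [i1 i2 i3 i4] := id2E.
apply: eq_mx2; rewrite !mul2E ?a ?b ?c ?d ?a' ?b' ?c' ?d' ?i1 ?i2 ?i3 ?i4; ring.
Qed.

Lemma M1_unit n x1 y1 t : M1 (Nmat n x1 y1) t \in unitmx.
Proof. by rewrite unitmxE M1_det unitr1. Qed.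

Lemma invmx_eq (P Q : 'M[R]_2) : P *m Q = 1%:M -> invmx P = Q.
Proof.
move=> h; have [uP _] := mulmx1_unit h.
by rewrite -[invmx P]mulmx1 -h mulmxA mulVmx // mul1mx.
Qed.

Lemma M1B N s t : M1 N s - M1 N t = (s - t) *: N.
Proof. by rewrite /M1 opprD addrACA subrr add0r scalerBl. Qed.

Lemma Nmat_bound n x1 y1 v : vnorm (Nmat n x1 y1 *m v) <= (`|n| * (x1^+2 + y1^+2)) * vnorm v.
Proof.
apply: le_sqrt_sq.
  by rewrite !mulr_ge0 ?vnorm_ge0 // addr_ge0 ?sqr_ge0.
have [a b c d] := mk2E (-(n*y1*x1)) (-(n*y1*y1)) (n*x1*x1) (n*x1*y1).
rewrite !exprMn vnorm_sqr (real_normK (num_real n)) !innerE !mulv2E /Nmat a b c d.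
set p := v 0 0; set q := v 1 0.
have h := sqr_ge0 (x1 * q - y1 * p).
have h2 : 0 <= n ^+ 2 * (x1 ^+ 2 + y1 ^+ 2) by rewrite mulr_ge0 ?sqr_ge0 // addr_ge0 ?sqr_ge0.
rewrite -subr_ge0; apply: le_trans (mulr_ge0 h2 h) _.
rewrite le_eqVlt; apply/orP; left; apply/eqP; rewrite /p /q; ring.
Qed.

End Mat.
Section Misc.
Variable R : realType.

Lemma retmap_split (p : nat) (s s' : nat -> 'M[R]_2) (Mx : 'M[R]_2) : (0 < p)%N ->
  (forall k, (0 < k < p)%N -> s' k = s k) -> s' 0%N = s 0%N *m Mx ->
  retmap p s' = retmap p s *m Mx.
Proof.
case: p => // p _ hk h0; rewrite /retmap !big_ord_recr /= subnn h0.
rewrite (eq_bigr (fun i : 'I_p => s (p - i)%N)); last first.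
  move=> i _; apply: hk; rewrite subn_gt0 ltn_ord /=.
  by rewrite ltnS leq_subr.
by rewrite !mulmxE mulrA.
Qed.

Lemma diag_pos (B P D : 'M[R]_2) : P \in unitmx -> is_diag_mx D ->
  B = P *m D *m invmx P -> 0 < D 0 0 -> 0 < D 1 1 ->
  0 < B 0 0 + B 1 1 /\ 0 < B 0 0 * B 1 1 - B 0 1 * B 1 0.
Proof.
move=> uP /is_diag_mxP dD hB d0 d1.
have t : \tr B = \tr D by rewrite hB mxtrace_mulC mulmxA mulVmx // mul1mx.
have d : \det B = \det D.
  by rewrite hB !det_mulmx mulrAC -det_mulmx mulmxV // det1 mul1r.
rewrite tr2 in t; rewrite det2 in d; rewrite t d tr2 det2 (dD 0 1) // (dD 1 0) //.
split; first lra; rewrite mul0r subr0; exact: mulr_gt0.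
Qed.

End Misc.
Section Ang.
Variable R : realType.

Lemma inner_pos (v : 'cV[R]_2) : v != 0 -> 0 < inner v v.
Proof.
move=> vn0; rewrite lt0r inner_ge0 andbT; apply/eqP => h.
move/eqP: vn0; apply; apply: vnorm_eq0; by rewrite /vnorm h sqrtr0.
Qed.

Lemma acos_lt (r r0 : R) : -1 <= r <= 1 -> -1 <= r0 <= 1 -> acos r < acos r0 -> r0 < r.
Proof.
move=> hr hr0 h.
have m1 : acos r \in `[0, pi]%R by rewrite in_itv /= acos_ge0 // acos_lepi.
have m2 : acos r0 \in `[0, pi]%R by rewrite in_itv /= acos_ge0 // acos_lepi.
have := ltr_cos m1 m2; rewrite h.
rewrite acosK; last by rewrite in_itv /=.
rewrite acosK; last by rewrite in_itv /=.
by [].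
Qed.

Lemma angle_small (q : R) (v1 v2 : 'cV[R]_2) : 0 < q -> v1 != 0 -> v2 != 0 ->
  angle v1 v2 < acos ((1 + q / 2) / (1 + q)) ->
  inner v1 v2 != 0 /\
  (v1 0 0 * v2 1 0 - v1 1 0 * v2 0 0) ^+ 2 < q * (inner v1 v2) ^+ 2.
Proof.
move=> q0 n1 n2 ha.
set g := inner v1 v2; set Dt := (v1 0 0 * v2 1 0 - v1 1 0 * v2 0 0).
have V1 := inner_pos v1 n1; have V2 := inner_pos v2 n2.
set a := inner v1 v1 in V1; set b := inner v2 v2 in V2.
have lag : a * b = g ^+ 2 + Dt ^+ 2 by rewrite /a /b /g /Dt !innerE; ring.
have ab0 : 0 < a * b by exact: mulr_gt0.
set S := Num.sqrt (a * b).
have S0 : 0 < S by rewrite sqrtr_gt0.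
have SS : S ^+ 2 = a * b by rewrite sqr_sqrtr // ltW.
have vv : vnorm v1 * vnorm v2 = S by rewrite /vnorm -sqrtrM // ltW.
have gS : `|g| <= S.
  rewrite -sqrtr_sqr; apply: ler_wsqrtr; rewrite lag; have := sqr_ge0 Dt; lra.
set r0 := (1 + q / 2) / (1 + q).
have q1 : 0 < 1 + q by lra.
have r0q : r0 * (1 + q) = 1 + q / 2 by rewrite /r0 mulfVK // gt_eqF.
have r00 : 0 < r0 by rewrite /r0 divr_gt0 //; lra.
have r01 : r0 < 1 by rewrite /r0 ltr_pdivrMr //; lra.
have hr : -1 <= `|g| / (vnorm v1 * vnorm v2) <= 1.
  rewrite vv; apply/andP; split.
    apply: le_trans (_ : 0 <= _); [lra | by rewrite divr_ge0 // ltW].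
  by rewrite ler_pdivrMr // mul1r.
have hr0 : -1 <= r0 <= 1 by apply/andP; split; lra.
have := acos_lt _ _ hr hr0 ha; rewrite vv => h.
rewrite ltr_pdivlMr // in h.
have gp : 0 < `|g| by apply: lt_trans h; exact: mulr_gt0.
split; first by rewrite -normr_gt0.
have h2 : (r0 * S) ^+ 2 < `|g| ^+ 2.
  by rewrite ltrXn2r // mulr_ge0 // ltW.
rewrite exprMn SS lag (real_normK (num_real g)) in h2.
have h3 : 1 <= r0 ^+ 2 * (1 + q).
  have e : r0 ^+ 2 * (1 + q) * (1 + q) = (1 + q / 2) ^+ 2 by rewrite -r0q; ring.
  have h4 : 1 + q <= (1 + q / 2) ^+ 2 by have := sqr_ge0 q; nra.
  nra.
have r02 : 0 < r0 ^+ 2 by exact: exprn_gt0.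
have g2 := sqr_ge0 g.
nra.
Qed.

End Ang.
Arguments M1 {R}. Arguments Nmat {R}. Arguments mk2 {R}.
Arguments angle_small {R}. Arguments inner_pos {R}. Arguments opnorm_le {R}.
Arguments opnorm_ub {R}. Arguments Nmat_bound {R}. Arguments M1_inv {R}.
Arguments retmap_split {R}. Arguments diag_pos {R}. Arguments eig_cases {R}.
Arguments Pmod_mono {R}. Arguments eigpairE {R}. Arguments eigpairI {R}.
Arguments invmx_eq {R}. Arguments M1B {R}. Arguments M1E {R}. Arguments mk2E {R}.
Arguments M1_det {R}. Arguments M1_unit {R}. Arguments vnormZ {R}. Arguments vnorm_ge0 {R}.
Arguments opnorm_ge0 {R}. Arguments innerE {R}. Arguments vnorm_e0 {R}.
Theorem lemma3p15 (R : realType) (K eps : R) :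
  0 < K -> 0 < eps ->
  exists alpha : R, 0 < alpha /\
  forall (S : topologicalType) (f : S -> S) (A : S -> 'M[R]_2),
    (* f is a homeomorphism *)
    (exists g : S -> S, cancel f g /\ cancel g f /\ continuous f /\ continuous g) ->
    (* A(x) : E(x) -> E(f x) linear isomorphisms *)
    (forall x, A x \in unitmx) ->
    (* the cocycle is periodic *)
    (forall x, exists n, (0 < n)%N /\ iter n f x = x) ->
    (* bounded by K:  sup_x ||A x|| < K  and  sup_x ||A x ^-1|| < K *)
    (exists K', K' < K /\ forall x, opnorm (A x) <= K' /\ opnorm (invmx (A x)) <= K') ->
    (* every return map is diagonalizable with real, positive, distinct eigenvalues *)
    (forall x p, is_period f x p ->
       exists P D : 'M[R]_2, P \in unitmx /\ is_diag_mx D /\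
         retmap p (fun k => A (iter k f x)) = P *m D *m invmx P /\
         0 < D 0 0 /\ 0 < D 1 1 /\ D 0 0 != D 1 1) ->
    forall (X : S) (p : nat), is_period f X p ->
    (* the angle between the two eigenspaces of the return map at X is < alpha *)
    (exists (l1 l2 : R) (v1 v2 : 'cV[R]_2),
        l1 != l2 /\ v1 != 0 /\ v2 != 0 /\
        retmap p (fun k => A (iter k f X)) *m v1 = l1 *: v1 /\
        retmap p (fun k => A (iter k f X)) *m v2 = l2 *: v2 /\
        angle v1 v2 < alpha) ->
    exists gamma : R -> nat -> 'M[R]_2,
      (* gamma : [0,1] -> C(X) *)
      (forall t, 0 <= t <= 1 -> in_CX p (gamma t)) /\
      (* continuity for the metric dist on C(X) *)
      (forall t, 0 <= t <= 1 -> forall e, 0 < e -> exists d, 0 < d /\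
         forall s, 0 <= s <= 1 -> `|s - t| < d -> distC p (gamma s) (gamma t) < e) /\
      (* (1) gamma(0) = A restricted to the orbit of X *)
      (forall k, (k < p)%N -> gamma 0 k = A (iter k f X)) /\
      (* (2) diam(gamma) < eps *)
      (exists e', e' < eps /\ forall s t, 0 <= s <= 1 -> 0 <= t <= 1 ->
         distC p (gamma s) (gamma t) <= e') /\
      (* (3) det of the return map is constant *)
      (forall t, 0 <= t <= 1 ->
         \det (retmap p (gamma t)) = \det (retmap p (gamma 0))) /\
      (* (4) monotonicity of the moduli of the eigenvalues *)
      (forall s t, 0 <= s -> s < t -> t <= 1 ->
         forall z1 z2 w1 w2, eigpair (retmap p (gamma s)) z1 z2 ->
           eigpair (retmap p (gamma t)) w1 w2 ->
           Num.min (cmod z1) (cmod z2) <= Num.min (cmod w1) (cmod w2) /\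
           Num.max (cmod z1) (cmod z2) >= Num.max (cmod w1) (cmod w2)) /\
      (* (5) the return map of gamma(1) has two non-real eigenvalues *)
      (exists z1 z2, eigpair (retmap p (gamma 1)) z1 z2 /\
         complex.Im z1 != 0 /\ complex.Im z2 != 0).
Proof.
move=> K0 eps0.
pose q := (eps / K) ^+ 2.
have q0 : 0 < q by rewrite exprn_gt0 // divr_gt0.
exists (acos ((1 + q / 2) / (1 + q))); split.
  apply: acos_gt0; have q1 : 0 < 1 + q by lra.
  apply/andP; split.
    apply: le_trans (_ : 0 <= _); [lra | apply: divr_ge0; lra].
  by rewrite ltr_pdivrMr //; lra.
move=> S f A _ Aunit _ [K' [K'K Kb]] hdiag X p hper
  [l1 [l2 [v1 [v2 [l12 [n1 [n2 [e1 [e2 ha]]]]]]]]].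
pose B := retmap p (fun k => A (iter k f X)).
have [gn0 hDt] := angle_small q v1 v2 q0 n1 n2 ha.
have V1 := inner_pos v1 n1.
rewrite innerE in gn0; rewrite innerE in hDt; rewrite innerE in V1.
have E1 : B 0 0 * v1 0 0 + B 0 1 * v1 1 0 = l1 * v1 0 0.
  by have := congr1 (fun M : 'cV[R]_2 => M 0 0) e1; rewrite mulv2E mxE.
have E2 : B 1 0 * v1 0 0 + B 1 1 * v1 1 0 = l1 * v1 1 0.
  by have := congr1 (fun M : 'cV[R]_2 => M 1 0) e1; rewrite mulv2E mxE.
have E3 : B 0 0 * v2 0 0 + B 0 1 * v2 1 0 = l2 * v2 0 0.
  by have := congr1 (fun M : 'cV[R]_2 => M 0 0) e2; rewrite mulv2E mxE.
have E4 : B 1 0 * v2 0 0 + B 1 1 * v2 1 0 = l2 * v2 1 0.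
  by have := congr1 (fun M : 'cV[R]_2 => M 1 0) e2; rewrite mulv2E mxE.
clear e1 e2 ha.
move: (v1 0 0) (v1 1 0) (v2 0 0) (v2 1 0) E1 E2 E3 E4 gn0 hDt V1 => x1 y1 x2 y2 E1 E2 E3 E4 gn0 hDt V1.
pose g := x1 * x2 + y1 * y2.
pose Dt := x1 * y2 - y1 * x2.
pose Vn := x1 * x1 + y1 * y1.
pose c := x1 * (B 0 0 * (- y1) + B 0 1 * x1) + y1 * (B 1 0 * (- y1) + B 1 1 * x1).
have Hc : Dt * c = Vn * g * (l2 - l1).
  have -> : Dt * c = - g * (x1 * (B 0 0 * x1 + B 0 1 * y1) + y1 * (B 1 0 * x1 + B 1 1 * y1))
     + Vn * (x1 * (B 0 0 * x2 + B 0 1 * y2) + y1 * (B 1 0 * x2 + B 1 1 * y2)) by rewrite /Dt /c /g /Vn; ring.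
  rewrite E1 E2 E3 E4 /g /Vn; ring.
have l12' : l2 - l1 != 0 by rewrite subr_eq0 eq_sym.
have Vn0 : Vn != 0 by rewrite /Vn gt_eqF.
have RHS0 : Vn * g * (l2 - l1) != 0 by rewrite !mulf_neq0.
have Dt0 : Dt != 0 by apply: contraNneq RHS0 => h; rewrite -Hc h mul0r.
have c0 : c != 0 by apply: contraNneq RHS0 => h; rewrite -Hc h mulr0.
have hT : B 0 0 + B 1 1 = l1 + l2.
  apply: (mulfI Dt0).
  have -> : Dt * (B 0 0 + B 1 1) = y2 * (B 0 0 * x1 + B 0 1 * y1) - y1 * (B 0 0 * x2 + B 0 1 * y2)
     - x2 * (B 1 0 * x1 + B 1 1 * y1) + x1 * (B 1 0 * x2 + B 1 1 * y2) by rewrite /Dt; ring.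
  rewrite E1 E2 E3 E4 /Dt; ring.
have hD : B 0 0 * B 1 1 - B 0 1 * B 1 0 = l1 * l2.
  apply: (mulIf Dt0).
  have -> : (B 0 0 * B 1 1 - B 0 1 * B 1 0) * Dt = (B 0 0 * x1 + B 0 1 * y1) * (B 1 0 * x2 + B 1 1 * y2)
     - (B 0 0 * x2 + B 0 1 * y2) * (B 1 0 * x1 + B 1 1 * y1) by rewrite /Dt; ring.
  rewrite E1 E2 E3 E4 /Dt; ring.
have p0 : (0 < p)%N by case: hper.
have [P [D [uP [dD [hB [d0 [d1 _]]]]]]] := hdiag X p hper.
have [trp dtp] := diag_pos B P D uP dD hB d0 d1.
rewrite hT in trp; rewrite hD in dtp.
have l10 : 0 < l1 by nra.
have l20 : 0 < l2 by nra.
pose del := `|l1 - l2|.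
have del0 : 0 < del by rewrite normr_gt0 subr_eq0.
have delT : del < l1 + l2 by rewrite /del ltr_norml; apply/andP; split; lra.
have del2 : (l1 + l2 - del) ^+ 2 < 4 * (l1 * l2).
  rewrite /del; have [h|h] := leP 0 (l1 - l2).
    rewrite ger0_norm //.
    have : l2 < l1 by rewrite lt_neqAle eq_sym l12 /=; lra.
    nra.
  rewrite ltr0_norm //; nra.
pose n := - del / c.
have nc : n * c = - del by rewrite /n mulfVK.
pose N := Nmat n x1 y1.
pose mu := `|n| * (x1 ^+ 2 + y1 ^+ 2).
have mu0 : 0 <= mu by rewrite /mu mulr_ge0 // addr_ge0 // sqr_ge0.
have g0 : 0 < g ^+ 2 by rewrite lt0r sqr_ge0 andbT sqrf_eq0.
have hmu : mu ^+ 2 * g ^+ 2 = Dt ^+ 2.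
  have dd : del ^+ 2 = (l2 - l1) ^+ 2 by rewrite /del (real_normK (num_real _)); ring.
  have dp : del ^+ 2 != 0 by rewrite sqrf_eq0 gt_eqF.
  apply: (mulIf dp).
  have e : (Dt * c * n) ^+ 2 = (Vn * g * (l2 - l1) * n) ^+ 2 by rewrite Hc.
  rewrite /mu exprMn (real_normK (num_real _)).
  have -> : Dt ^+ 2 * del ^+ 2 = (Dt * (n * c)) ^+ 2 by rewrite nc; ring.
  have -> : (Dt * (n * c)) ^+ 2 = (Dt * c * n) ^+ 2 by ring.
  rewrite e dd /Vn; ring.
have mu_q : mu ^+ 2 < q.
  rewrite -(ltr_pM2r g0) hmu.
  have -> : Dt = x1 * y2 - y1 * x2 by [].
  have -> : g = x1 * x2 + y1 * y2 by [].
  done.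
have Kmu : K * mu < eps.
  have eK : eps = K * (eps / K) by rewrite mulrC divfK // gt_eqF.
  rewrite [X in _ < X]eK ltr_pM2l //.
  rewrite ltNge; apply/negP => h.
  have : (eps / K) ^+ 2 <= mu ^+ 2 by rewrite lerXn2r // ?nnegrE // divr_ge0 // ltW.
  by rewrite -/q leNgt mu_q.
pose AX := A X.
pose gamma := fun (t : R) (k : nat) => if k == 0%N then AX *m M1 N t else A (iter k f X).
have uAX : AX \in unitmx := Aunit X.
have [KA KAi] := Kb X.
have ginv : forall t, invmx (AX *m M1 N t) = M1 N (- t) *m invmx AX.
  move=> t; apply: invmx_eq.
  by rewrite mulmxA -(mulmxA AX) M1_inv mulmx1 mulmxV.
have bnd1 : forall (Y : 'M[R]_2) (a : R), opnorm Y <= K' ->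
    opnorm (Y *m (a *: N)) <= `|a| * (K * mu).
  move=> Y a hY; apply: opnorm_le => v v1'.
  rewrite -mulmxA -scalemxAl.
  apply: le_trans (opnorm_ub Y _) _.
  rewrite vnormZ.
  have hN := Nmat_bound n x1 y1 v; rewrite v1' mulr1 -/mu in hN.
  have hK : opnorm Y <= K by apply: le_trans hY (ltW K'K).
  rewrite mulrCA; apply: ler_wpM2l; first exact: normr_ge0.
  by apply: ler_pM => //; [exact: opnorm_ge0 | exact: vnorm_ge0].
have bnd2 : forall (Y : 'M[R]_2) (a : R), opnorm Y <= K' ->
    opnorm ((a *: N) *m Y) <= `|a| * (K * mu).
  move=> Y a hY; apply: opnorm_le => v v1'.
  rewrite -mulmxA -scalemxAl vnormZ.
  apply: ler_wpM2l; first exact: normr_ge0.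
  apply: le_trans (Nmat_bound n x1 y1 _) _; rewrite -/mu mulrC.
  apply: ler_pM => //; first exact: vnorm_ge0.
  apply: le_trans (opnorm_ub Y _) _; rewrite v1' mulr1.
  by apply: le_trans hY (ltW K'K).
have bnd0 : forall b : R, 0 <= b -> opnorm (0 : 'M[R]_2) <= b.
  move=> b b0; apply: opnorm_le => v _; rewrite mul0mx.
  suff -> : vnorm (0 : 'cV[R]_2) = 0 by [].
  by rewrite /vnorm innerE !mxE !mulr0 addr0 sqrtr0.
have hdist : forall s t, distC p (gamma s) (gamma t) <= `|s - t| * (K * mu).
  move=> s t.
  have b0 : 0 <= `|s - t| * (K * mu) by rewrite mulr_ge0 // mulr_ge0 // ltW.
  rewrite /distC ge_max; apply/andP; split; apply: bigmax_le => // k _; rewrite /gamma;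
    case: eqP => _.
  - by rewrite -mulmxBr M1B; apply: bnd1.
  - by rewrite subrr; apply: bnd0.
  - rewrite !ginv -mulmxBl M1B distrC.
    have -> : - s - - t = t - s by rewrite opprK addrC.
    exact: bnd2.
  - by rewrite subrr; apply: bnd0.
have hret : forall t, retmap p (gamma t) = B *m M1 N t.
  move=> t; apply: retmap_split => //.
  by move=> k /andP [k0 _]; rewrite /gamma (negbTE (lt0n_neq0 k0)).
have htr : forall t, (B *m M1 N t) 0 0 + (B *m M1 N t) 1 1 = (l1 + l2) - t * del.
  move=> t; rewrite /N M1E !mul2E.
  have [m00 m01 m10 m11] := mk2E (1 - t*(n*y1*x1)) (-(t*(n*y1*y1))) (t*(n*x1*x1)) (1 + t*(n*x1*y1)).
  rewrite m00 m01 m10 m11 -hT.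
  have -> : t * del = - (t * (n * c)) by rewrite nc; ring.
  rewrite /c; ring.
have hdet : forall t, (B *m M1 N t) 0 0 * (B *m M1 N t) 1 1 - (B *m M1 N t) 0 1 * (B *m M1 N t) 1 0 = l1 * l2.
  by move=> t; rewrite -det2 det_mulmx M1_det mulr1 det2.
have hretdet : forall t, \det (retmap p (gamma t)) = l1 * l2.
  by move=> t; rewrite hret det2.
exists gamma; split.
  move=> t _ k _; rewrite /gamma; case: eqP => _; last exact: Aunit.
  by rewrite unitmx_mul uAX M1_unit.
split.
  move=> t _ e e0.
  have Kmu0 : 0 < K * mu + 1 by rewrite ltr_pwDr // mulr_ge0 // ltW.
  exists (e / (K * mu + 1)); split; first by rewrite divr_gt0.
  move=> s _ hs.
  have h1 := hdist s t.
  have h2 : `|s - t| * (K * mu) <= `|s - t| * (K * mu + 1) by rewrite ler_wpM2l // lerDl.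
  have h3 : `|s - t| * (K * mu + 1) < e by rewrite -ltr_pdivlMr.
  exact: le_lt_trans h1 (le_lt_trans h2 h3).
split.
  move=> k _; rewrite /gamma; case: eqP => [->|] //.
  by rewrite /M1 scale0r addr0 mulmx1.
split.
  exists (K * mu); split => // s t /andP [s0 s1] /andP [t0 t1].
  apply: le_trans (hdist s t) _.
  have km : 0 <= K * mu by rewrite mulr_ge0 // ltW.
  have st1 : `|s - t| <= 1 by rewrite ler_norml; apply/andP; split; lra.
  by rewrite ler_piMl.
split.
  by move=> t _; rewrite !hretdet.
split.
  move=> s t s0 st t1 z1 z2 w1 w2.
  rewrite !hret => /eigpairE [zs zp] /eigpairE [ws wp].
  rewrite htr hdet in zs zp; rewrite htr hdet in ws wp.
  have tdl : t * del <= del by rewrite ler_piMl // ltW.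
  have sdl : s * del <= t * del by rewrite ler_pM2r // ltW.
  have tt0 : 0 < l1 + l2 - t * del by lra.
  have ts0 : 0 < l1 + l2 - s * del by lra.
  have dd0 : 0 < l1 * l2 by exact: mulr_gt0.
  apply: (Pmod_mono (l1 * l2) (l1 + l2 - s * del) (l1 + l2 - t * del)) => //.
    by rewrite ltrD2l ltrN2 ltr_pM2r.
  + exact: eig_cases.
  + exact: eig_cases.
pose tau := l1 + l2 - 1 * del.
have tau2 : 0 < l1 * l2 - tau ^+ 2 / 4.
  rewrite subr_gt0 ltr_pdivrMr // mulrC; rewrite /tau mul1r; lra.
pose s0 := Num.sqrt (l1 * l2 - tau ^+ 2 / 4).
have s00 : 0 < s0 by rewrite sqrtr_gt0.
have ss : s0 ^+ 2 = l1 * l2 - tau ^+ 2 / 4 by rewrite sqr_sqrtr // ltW.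
exists (complex.Complex (tau / 2) s0), (complex.Complex (tau / 2) (- s0)).
split; last by rewrite /= gt_eqF // oppr_eq0 gt_eqF.
rewrite hret; apply: eigpairI; rewrite ?htr ?hdet.
  change (complex.Complex (tau/2 + tau/2) (s0 + - s0) = complex.Complex (l1 + l2 - 1 * del) 0).
  congr complex.Complex; [by rewrite /tau; field | by rewrite subrr].
change (complex.Complex (tau/2 * (tau/2) - s0 * (- s0)) (tau/2 * (- s0) + s0 * (tau/2))
   = complex.Complex (l1 * l2) 0).
congr complex.Complex; last by ring.
have e2 : s0 * (- s0) = - (l1 * l2 - tau ^+ 2 / 4) by rewrite mulrN -expr2 ss.
by rewrite e2; field.
Qed.
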